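(* Let $\lambda>0$ be a real number and let $\mathbf{H}$ be the $4\times 8$ binary matrix $$\mathbf{H}=\begin{bmatrix}1&1&1&1&0&0&0&0\\0&0&1&1&1&1&0&0\\0&0&0&0&1&1&1&1\\0&1&0&1&0&1&0&1\end{bmatrix}.$$ For any $\mathbf{k}_1\in\{0,1\}^4$, let $\mathbf{v}_1:=\mathrm{Encode}_{E'_8}(\mathbf{k}_1)=\lambda\cdot(\mathbf{k}_1\mathbf{H}\bmod 2)\in[0,\lambda]^8$. For any $\mathbf{v}_2\in\mathbb{R}^8$, let $\mathbf{k}_2:=\mathrm{Decode}_{E'_8}(\mathbf{v}_2)$ (the decoding algorithm described in the context). If $\|\mathbf{v}_2-\mathbf{v}_1\|_{2\lambda,2}<\lambda$, then $\mathbf{k}_1=\mathbf{k}_2$.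
   Context: Norms: for a positive real $Q$ and $w\in\mathbb{R}$, $w\bmod^{\pm}Q$ denotes the representative of $w$ modulo $Q$ in $[-Q/2,Q/2)$, $\|w\|_{Q,\infty}:=|w\bmod^{\pm}Q|$ and $\|w\|_{Q,2}:=\|w\|_{Q,\infty}$; for a vector $\mathbf{w}=(w_0,\dots,w_{m-1})$, $\|\mathbf{w}\|_{Q,2}:=\sqrt{\sum_i\|w_i\|_{Q,\infty}^2}$. The scalable $E_8$ lattice is $E'_8=\lambda\cdot[C\cup(C+\mathbf{c})]$ where $C=\{(x_1,x_1,x_2,x_2,x_3,x_3,x_4,x_4)\in\{0,1\}^8:\sum x_i\equiv 0\bmod 2\}$ and $\mathbf{c}=(0,1,0,1,0,1,0,1)$; equivalently $E'_8=\{\lambda(\mathbf{k}\mathbf{H}\bmod 2):\mathbf{k}\in\{0,1\}^4\}$. Subroutine $\mathrm{Decode}_{C'}(\mathbf{x})$ for $\mathbf{x}=(x_0,\dots,x_7)\in\mathbb{R}^8$: set $mind:=+\infty$, $mini:=0$, $\mathsf{TotalCost}:=0$. For $i=0,\dots,3$: let $c_0:=\|x_{2i}\|_{2\lambda,2}^2+\|x_{2i+1}\|_{2\lambda,2}^2$ and $c_1:=\|x_{2i}-\lambda\|_{2\lambda,2}^2+\|x_{2i+1}-\lambda\|_{2\lambda,2}^2$; let $k_i:=\arg\min\{c_0,c_1\}\in\{0,1\}$; add $c_{k_i}$ to $\mathsf{TotalCost}$; if $c_{1-k_i}-c_{k_i}<mind$, set $mind:=c_{1-k_i}-c_{k_i}$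 and $mini:=i$. After the loop, if $k_0+k_1+k_2+k_3$ is odd, replace $k_{mini}$ by $1-k_{mini}$ and add $mind$ to $\mathsf{TotalCost}$. Output $((k_0,k_1,k_2,k_3),\mathsf{TotalCost})$. Algorithm $\mathrm{Decode}_{E'_8}(\mathbf{x})$: compute $(\mathbf{k}_0',T_0):=\mathrm{Decode}_{C'}(\mathbf{x})$ and $(\mathbf{k}_1',T_1):=\mathrm{Decode}_{C'}(\mathbf{x}-\lambda\mathbf{c})$; let $b:=\arg\min\{T_0,T_1\}$; write $\mathbf{k}'_b=(k_0,k_1,k_2,k_3)$ and output $(k_0,\,k_1\oplus k_0,\,k_3,\,b)\in\{0,1\}^4$. *)

(* Defs.v *)
From mathcomp Require Import all_boot all_order all_algebra.
From mathcomp Require Import reals.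
Set Implicit Arguments. Unset Strict Implicit. Unset Printing Implicit Defensive.
Import Order.TTheory GRing.Theory Num.Theory.
Local Open Scope ring_scope.

Definition key := (bool * bool * bool * bool)%type.
Definition kbit (k : key) (i : nat) : bool :=
  let: (a, b, c, d) := k in
  match i with 0 => a | 1 => b | 2 => c | _ => d end.

Definition Hrow (i : nat) : seq bool :=
  match i with
  | 0 => [:: true; true; true; true; false; false; false; false]
  | 1 => [:: false; false; true; true; true; true; false; false]
  | 2 => [:: false; false; false; false; true; true; true; true]
  | _ => [:: false; true; false; true; false; true; false; true]
  end.
Definition Hmat (i j : nat) : bool := nth false (Hrow i) j.

Section E8.
Variable R : realType.

(* w mod^{+-} Q : the representative of w modulo Q in [-Q/2, Q/2) *)
Definition modpm (Q w : R) : R := w - Q * (Num.floor (w / Q + 2^-1))%:~R.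
(* ||w||_{Q,inf} = ||w||_{Q,2} for scalars *)
Definition qnorm (Q w : R) : R := `|modpm Q w|.
Definition qnorm_vec (Q : R) (w : 'rV[R]_8) : R :=
  Num.sqrt (\sum_(i < 8) qnorm Q (w 0 i) ^+ 2).

Definition encodeE8 (lam : R) (k : key) : 'rV[R]_8 :=
  \row_(j < 8) (lam * (\big[addb/false]_(i < 4) (kbit k i && Hmat i j) : nat)%:R).

Definition ent (x : 'rV[R]_8) (n : nat) : R := x 0 (inord n).

Definition pcost (lam : R) (x : 'rV[R]_8) (i : nat) (b : bool) : R :=
  let a := if b then lam else 0 in
  qnorm (2 * lam) (ent x (2 * i) - a) ^+ 2 + qnorm (2 * lam) (ent x (2 * i + 1) - a) ^+ 2.

(* k_i := argmin{c0,c1}; ties resolved to 0 *)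
Definition pbit (lam : R) (x : 'rV[R]_8) (i : nat) : bool :=
  pcost lam x i true < pcost lam x i false.

(* loop state: (mind (None = +infinity), mini, TotalCost) *)
Definition loop_step (lam : R) (x : 'rV[R]_8)
    (st : option R * nat * R) (i : nat) : option R * nat * R :=
  let: (mind, mini, tot) := st in
  let k := pbit lam x i in
  let ck := pcost lam x i k in
  let d := pcost lam x i (~~ k) - ck in
  let better := if mind is Some m then d < m else true in
  (if better then (Some d, i) else (mind, mini), tot + ck).

Definition decodeC' (lam : R) (x : 'rV[R]_8) : key * R :=
  let: (mind, mini, tot) := foldl (loop_step lam x) (None, 0%N, 0) (iota 0 4) in
  let k0 := pbit lam x 0 in let k1 := pbit lam x 1 in
  let k2 := pbit lam x 2 in let k3 := pbit lam x 3 in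
  let odd_par := k0 (+) k1 (+) k2 (+) k3 in
  let fl i b := if odd_par && (mini == i) then ~~ b else b in
  let md := if mind is Some m then m else 0 in
  ((fl 0%N k0, fl 1%N k1, fl 2%N k2, fl 3%N k3),
   if odd_par then tot + md else tot).

Definition cvec : 'rV[R]_8 := \row_(j < 8) (odd j)%:R.

Definition decodeE8 (lam : R) (x : 'rV[R]_8) : key :=
  let: (k0', T0) := decodeC' lam x in
  let: (k1', T1) := decodeC' lam (x - lam *: cvec) in
  let b := T1 < T0 in (* argmin, ties resolved to 0 *)
  let: (a0, a1, _, a3) := if b then k1' else k0' in
  (a0, a1 (+) a0, a3, b).

End E8.

(* Main.v *)
Require Import Defs.
From mathcomp Require Import all_boot all_order all_algebra.
From mathcomp Require Import reals.
From mathcomp Require Import ring lra.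
Import Order.TTheory GRing.Theory Num.Theory.
Local Open Scope ring_scope.


Section Q.
Variable R : realType.
Implicit Types (Q w r : R).

Lemma modpm_char Q w (m : int) r : 0 < Q -> -(Q/2) <= r < Q/2 ->
  w = Q * m%:~R + r -> modpm Q w = r.
Proof.
move=> Q0 /andP[r1 r2] ->.
rewrite /modpm.
have -> : Num.floor ((Q * m%:~R + r) / Q + 2^-1) = m.
  apply: floor_def.
  have -> : (Q * m%:~R + r) / Q + 2^-1 = m%:~R + (r / Q + 2^-1).
    by field; rewrite gt_eqF.
  rewrite intrD.
  have h1 : 0 <= r / Q + 2^-1.
    have : -(Q/2) / Q <= r / Q by rewrite ler_pM2r ?invr_gt0.
    have -> : -(Q/2)/Q = - 2^-1 by field; rewrite gt_eqF.
    lra.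
  have h2 : r / Q + 2^-1 < 1.
    have : r / Q < (Q/2) / Q by rewrite ltr_pM2r ?invr_gt0.
    have -> : (Q/2)/Q = 2^-1 by field; rewrite gt_eqF.
    lra.
  apply/andP; split; lra.
ring.
Qed.

Lemma modpm_range Q w : 0 < Q -> -(Q/2) <= modpm Q w < Q/2.
Proof.
move=> Q0; rewrite /modpm.
set n := Num.floor _.
have /andP[h1 h2] := floor_itv (w / Q + 2^-1).
rewrite -/n intrD in h1 h2.
have e : w = Q * (w / Q) by field; rewrite gt_eqF.
have a1 : Q * n%:~R <= Q * (w/Q + 2^-1) by rewrite ler_pM2l.
have a2 : Q * (w/Q + 2^-1) < Q * (n%:~R + 1%:~R) by rewrite ltr_pM2l.
rewrite mulrDr -e in a1 a2.
rewrite mulrDr mulr1 in a2.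
apply/andP; split; lra.
Qed.

Lemma modpm_eq Q w : 0 < Q -> w = Q * (Num.floor (w / Q + 2^-1))%:~R + modpm Q w.
Proof. move=> _; rewrite /modpm; ring. Qed.

Lemma qnorm_subQ Q w : 0 < Q -> qnorm Q (w - Q) = qnorm Q w.
Proof.
move=> Q0; rewrite /qnorm; congr `|_|.
rewrite (@modpm_char Q (w - Q) (Num.floor (w / Q + 2^-1) - 1) (modpm Q w)) //.
  exact: modpm_range.
rewrite intrD /=.
have := modpm_eq Q w Q0. lra.
Qed.

Lemma qnorm_range Q w : 0 < Q -> 0 <= qnorm Q w <= Q/2.
Proof.
move=> Q0; have /andP[h1 h2] := modpm_range _ w Q0.
rewrite /qnorm; apply/andP; split => //.
case: (lerP 0 (modpm Q w)) => h.
  rewrite ger0_norm //; lra.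
rewrite ltr0_norm //; lra.
Qed.

Lemma qnorm_subhalf (lam w : R) : 0 < lam -> qnorm (2 * lam) (w - lam) = lam - qnorm (2*lam) w.
Proof.
move=> l0; have Q0 : 0 < 2 * lam by lra.
have /andP[h1 h2] := modpm_range _ w Q0.
have e := modpm_eq _ w Q0.
set n := Num.floor _ in e.
set r := modpm _ w in h1 h2 e *.
rewrite /qnorm -/r.
case: (lerP 0 r) => h.
  rewrite (ger0_norm h).
  have -> : modpm (2 * lam) (w - lam) = r - lam.
    apply: (@modpm_char _ _ n) => //; first by apply/andP; split; lra.
    lra.
  rewrite ltr0_norm; lra.
rewrite (ltr0_norm h).
have -> : modpm (2 * lam) (w - lam) = r + lam.
  apply: (@modpm_char _ _ (n - 1)) => //; first by apply/andP; split; lra.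
  rewrite intrD /=; lra.
rewrite ger0_norm; lra.
Qed.

End Q.


Ltac splitif := repeat match goal with |- context[if ?c then _ else _] => let E := fresh "E" in case E: c => /= end.

Ltac normh := repeat match goal with
 | H : (?a < ?b) = false |- _ => move/negbT: H; rewrite -leNgt => H
 | H : (?a < ?b) = true |- _ => move: H => /idP H
 end.

Section C.
Variable R : realType.
Variable lam : R.

Definition cc (x : 'rV[R]_8) i := pcost lam x i (pbit lam x i).
Definition dd (x : 'rV[R]_8) i := pcost lam x i (~~ pbit lam x i) - pcost lam x i (pbit lam x i).

Lemma dd_ge0 x i : 0 <= dd x i.
Proof.
rewrite /dd /pbit; case: ltrP => h /=; lra.
Qed.

Lemma fold_spec x : exists m mi tot,
  foldl (loop_step lam x) (None, 0%N, 0) (iota 0 4) = (Some m, mi, tot) /\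
  (mi < 4)%N /\ m = dd x mi /\ (forall j, (j < 4)%N -> dd x mi <= dd x j) /\
  tot = cc x 0 + cc x 1 + cc x 2 + cc x 3.
Proof.
rewrite /= /loop_step -/(cc x 0) -/(cc x 1) -/(cc x 2) -/(cc x 3)
  -/(dd x 0) -/(dd x 1) -/(dd x 2) -/(dd x 3) /=.
splitif; (do 3 eexists); (split; first reflexivity);
  (split; first done); (split; first reflexivity); (split; last lra);
  case=> [|[|[|[|j]]]] //= _; normh; lra.
Qed.


Lemma pair_facts x i (b : bool) P Q :
  pcost lam x i b = P -> pcost lam x i (~~ b) = Q ->
  [/\ cc x i = (if pbit lam x i (+) b then Q else P),
      dd x i = (if pbit lam x i (+) b then P - Q else Q - P) &
      (pbit lam x i (+) b -> Q <= P)].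
Proof.
rewrite /dd /cc /pbit; case: b => /= hP hQ.
  rewrite hP hQ; case: ltrP => h /=; split => //; lra.
rewrite hP hQ; case: ltrP => h /=; split => //; lra.
Qed.

Lemma core_true x (t : key) (p q : nat -> R) :
  ~~ (kbit t 0 (+) kbit t 1 (+) kbit t 2 (+) kbit t 3) ->
  (forall i, (i < 4)%N -> pcost lam x i (kbit t i) = p i) ->
  (forall i, (i < 4)%N -> pcost lam x i (~~ kbit t i) = q i) ->
  (forall i j, (i < 4)%N -> (j < 4)%N -> i != j -> p i + p j < q i + q j) ->
  decodeC' lam x = (t, p 0%N + p 1%N + p 2%N + p 3%N).
Proof.
move=> par hp hq hG.
have [c0 d0 w0] := @pair_facts x 0%N _ _ _ (hp 0%N isT) (hq 0%N isT).
have [c1 d1 w1] := @pair_facts x 1%N _ _ _ (hp 1%N isT) (hq 1%N isT).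
have [c2 d2 w2] := @pair_facts x 2%N _ _ _ (hp 2%N isT) (hq 2%N isT).
have [c3 d3 w3] := @pair_facts x 3%N _ _ _ (hp 3%N isT) (hq 3%N isT).
have [m [mi [tot [hf [hmi [hm [hmin htot]]]]]]] := fold_spec x.
have g01 := hG 0%N 1%N isT isT isT.
have g02 := hG 0%N 2%N isT isT isT.
have g03 := hG 0%N 3%N isT isT isT.
have g12 := hG 1%N 2%N isT isT isT.
have g13 := hG 1%N 3%N isT isT isT.
have g23 := hG 2%N 3%N isT isT isT.
rewrite /decodeC' hf /=.
rewrite htot hm {hf htot hm hp hq hG}.
case: mi hmi hmin => [|[|[|[|mi]]]] // _ hmin;
have m0 := hmin 0%N isT; have m1 := hmin 1%N isT;
have m2 := hmin 2%N isT; have m3 := hmin 3%N isT; clear hmin;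
move: par c0 d0 w0 c1 d1 w1 c2 d2 w2 c3 d3 w3 m0 m1 m2 m3;
case: t => [[[t0 t1] t2] t3] /=;
move: (pbit lam x 0) (pbit lam x 1) (pbit lam x 2) (pbit lam x 3) => k0 k1 k2 k3;
move: (cc x 0) (cc x 1) (cc x 2) (cc x 3) (dd x 0) (dd x 1) (dd x 2) (dd x 3) => C0 C1 C2 C3 D0 D1 D2 D3;
move=> par -> -> h0 -> -> h1 -> -> h2 -> -> h3;
have hpar : k0 (+) k1 (+) k2 (+) k3 = (k0 (+) t0) (+) (k1 (+) t1) (+) (k2 (+) t2) (+) (k3 (+) t3)
  by clear -par; move: par; case: k0; case: k1; case: k2; case: k3; case: t0; case: t1; case: t2; case: t3.
all: rewrite hpar; clear hpar par.
all: have -> : k0 = (k0 (+) t0) (+) t0 by rewrite -addbA addbb addbF.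
all: have -> : k1 = (k1 (+) t1) (+) t1 by rewrite -addbA addbb addbF.
all: have -> : k2 = (k2 (+) t2) (+) t2 by rewrite -addbA addbb addbF.
all: have -> : k3 = (k3 (+) t3) (+) t3 by rewrite -addbA addbb addbF.
all: move: h0 h1 h2 h3; move: (k0 (+) t0) (k1 (+) t1) (k2 (+) t2) (k3 (+) t3) => w0 w1 w2 w3 h0 h1 h2 h3.
all: rewrite ?addbK.
all: move=> m0 m1 m2 m3; move: h0 h1 h2 h3 m0 m1 m2 m3;
  case: w0; case: w1; case: w2; case: w3 => /= h0 h1 h2 h3 m0 m1 m2 m3;
  repeat match goal with H : is_true true -> _ |- _ => specialize (H isT)
                   | H : is_true false -> _ |- _ => clear H end;
  rewrite ?negbK;
  first [ (congr (_, _); match goal with |- @eq key _ _ => fail 1 | _ => lra end)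
        | (exfalso; lra) ].
Qed.

Lemma core_lb x (L : nat -> R) :
  (forall i b, (i < 4)%N -> L i <= pcost lam x i b) ->
  L 0%N + L 1%N + L 2%N + L 3%N <= (decodeC' lam x).2.
Proof.
move=> hL.
have [m [mi [tot [hf [hmi [hm [hmin htot]]]]]]] := fold_spec x.
rewrite /decodeC' hf /=.
have e0 := hL 0%N (pbit lam x 0) isT.
have e1 := hL 1%N (pbit lam x 1) isT.
have e2 := hL 2%N (pbit lam x 2) isT.
have e3 := hL 3%N (pbit lam x 3) isT.
have hd := dd_ge0 x mi.
rewrite /cc in htot.
case: ifP => _; lra.
Qed.
End C.


Definition beta (k : key) (j : nat) : bool := \big[addb/false]_(i < 4) (kbit k i && Hmat i j).

Lemma beta_pair k i : (i < 4)%N -> beta k (2 * i).+1 = beta k (2 * i) (+) kbit k 3.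
Proof.
case: k => [[[a b] c] d]; rewrite /beta !big_ord_recr !big_ord0 /Hmat /=.
by case: i => [|[|[|[|i]]]] //= _; case: a; case: b; case: c; case: d.
Qed.

Lemma beta_par k : ~~ (beta k 0 (+) beta k 2 (+) beta k 4 (+) beta k 6).
Proof.
case: k => [[[a b] c] d]; rewrite /beta !big_ord_recr !big_ord0 /Hmat /=.
by case: a; case: b; case: c; case: d.
Qed.

Lemma beta_key k : k = (beta k 0, beta k 2 (+) beta k 0, beta k 6, kbit k 3).
Proof.
case: k => [[[a b] c] d]; rewrite /beta !big_ord_recr !big_ord0 /Hmat /=.
by case: a; case: b; case: c; case: d.
Qed.


Section M.
Variable R : realType.
Variable lam : R.

Lemma coordG (hlam : 0 < lam) (w : R) (s b bt : bool) :
  qnorm (2 * lam) (w - lam * (s : nat)%:R - (if b then lam else 0)) =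
  if (b (+) s) == bt then qnorm (2 * lam) (w - lam * (bt : nat)%:R)
  else lam - qnorm (2 * lam) (w - lam * (bt : nat)%:R).
Proof.
have sh := fun w => @qnorm_subhalf R lam w hlam.
have Q0 : 0 < 2 * lam by lra.
case: s; case: b; case: bt => /=; rewrite ?mulr1 ?mulr0 ?subr0.
- by rewrite sh.
- have -> : w - lam - lam = w - 2 * lam by ring.
  by rewrite qnorm_subQ.
- by [].
- by rewrite sh.
- by [].
- by rewrite sh.
- rewrite sh; ring.
- by [].
Qed.


Definition uu (v2 : 'rV[R]_8) (k : key) n := qnorm (2 * lam) (ent v2 n - lam * (beta k n : nat)%:R).

Lemma ent_x v2 (c : bool) n : (n < 8)%N ->
  ent (if c then v2 - lam *: cvec R else v2) n = ent v2 n - lam * ((c && odd n) : nat)%:R.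
Proof.
move=> hn; case: c => /=; last by rewrite mulr0 subr0.
by rewrite /ent !mxE inordK.
Qed.

Lemma pcost_form (hlam : 0 < lam) v2 k (c : bool) i b : (i < 4)%N ->
  pcost lam (if c then v2 - lam *: cvec R else v2) i b =
  (if b == beta k (2 * i) then uu v2 k (2 * i) else lam - uu v2 k (2 * i)) ^+ 2 +
  (if b (+) c == beta k (2 * i).+1 then uu v2 k (2 * i).+1 else lam - uu v2 k (2 * i).+1) ^+ 2.
Proof.
move=> hi; rewrite /pcost addn1 !ent_x; first last.
- by case: i hi => [|[|[|[|i]]]].
- by case: i hi => [|[|[|[|i]]]].
rewrite (coordG hlam _ _ _ (beta k (2 * i))) (coordG hlam _ _ _ (beta k (2 * i).+1)) /uu.
have -> : odd (2 * i) = false by case: i hi => [|[|[|[|i]]]].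
have -> : odd (2 * i).+1 = true by case: i hi => [|[|[|[|i]]]].
by rewrite andbF andbT addbF.
Qed.

Lemma sum4_lt (hlam : 0 < lam) (a b c e : R) : 0 <= a -> 0 <= b -> 0 <= c -> 0 <= e ->
  a ^+ 2 + b ^+ 2 + c ^+ 2 + e ^+ 2 < lam ^+ 2 -> a + b + c + e < 2 * lam.
Proof.
move=> ha hb hc he h.
have h1 : (a + b + c + e) ^+ 2 <= 4 * (a ^+ 2 + b ^+ 2 + c ^+ 2 + e ^+ 2).
  have := sqr_ge0 (a - b); have := sqr_ge0 (a - c); have := sqr_ge0 (a - e);
  have := sqr_ge0 (b - c); have := sqr_ge0 (b - e); have := sqr_ge0 (c - e).
  rewrite !expr2 => *; nra.
rewrite ltNge; apply/negP => h2.
have h4 : 0 <= (a + b + c + e - 2 * lam) * (a + b + c + e + 2 * lam).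
  by apply: mulr_ge0; lra.
rewrite !expr2 in h h1; lra.
Qed.

Lemma helperG (hlam : 0 < lam) (a b c e : R) : 0 <= a -> 0 <= b -> 0 <= c -> 0 <= e ->
  a ^+ 2 + b ^+ 2 + c ^+ 2 + e ^+ 2 < lam ^+ 2 ->
  (a ^+ 2 + b ^+ 2) + (c ^+ 2 + e ^+ 2) <
  ((lam - a) ^+ 2 + (lam - b) ^+ 2) + ((lam - c) ^+ 2 + (lam - e) ^+ 2).
Proof.
move=> ha hb hc he h.
have := sum4_lt hlam _ _ _ _ ha hb hc he h.
move=> hs.
have : 0 < lam * (2 * lam - (a + b + c + e)) by apply: mulr_gt0; lra.
rewrite !expr2 => *; lra.
Qed.

Lemma bX1 (a : bool) : (~~ a == a) = false. Proof. by case: a. Qed.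
Lemma bX2 (a c : bool) : (~~ a (+) c == a (+) c) = false. Proof. by case: a; case: c. Qed.
Lemma bX3 (b a d : bool) : (b (+) ~~ d == a (+) d) = ~~ (b == a).
Proof. by case: a; case: b; case: d. Qed.

Definition pp v2 k i := uu v2 k (2 * i) ^+ 2 + uu v2 k (2 * i).+1 ^+ 2.
Definition qq v2 k i := (lam - uu v2 k (2 * i)) ^+ 2 + (lam - uu v2 k (2 * i).+1) ^+ 2.

Lemma coset_true (hlam : 0 < lam) v2 k (c : bool) : c = kbit k 3 ->
  (forall n, 0 <= uu v2 k n <= lam) ->
  pp v2 k 0 + pp v2 k 1 + pp v2 k 2 + pp v2 k 3 < lam ^+ 2 ->
  decodeC' lam (if c then v2 - lam *: cvec R else v2) =
  ((beta k 0, beta k 2, beta k 4, beta k 6), pp v2 k 0 + pp v2 k 1 + pp v2 k 2 + pp v2 k 3).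
Proof.
move=> hc hr hS.
apply: (@core_true R lam _ _ (pp v2 k) (qq v2 k)).
- exact: beta_par.
- move=> i hi.
  have -> : kbit (beta k 0, beta k 2, beta k 4, beta k 6) i = beta k (2 * i)
    by case: i hi => [|[|[|[|i]]]].
  by rewrite (pcost_form hlam _ k) // beta_pair // -hc !eqxx.
- move=> i hi.
  have -> : kbit (beta k 0, beta k 2, beta k 4, beta k 6) i = beta k (2 * i)
    by case: i hi => [|[|[|[|i]]]].
  by rewrite (pcost_form hlam _ k) // beta_pair // -hc bX1 bX2.
- move=> i j hi hj hij.
  have hr0 n : 0 <= uu v2 k n by case/andP: (hr n).
  have r0 := hr 0%N; have r1 := hr 1%N; have r2 := hr 2%N; have r3 := hr 3%N;
  have r4 := hr 4%N; have r5 := hr 5%N; have r6 := hr 6%N; have r7 := hr 7%N.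
  move: hS; rewrite /pp /qq.
  have s0 := sqr_ge0 (uu v2 k 0); have s1 := sqr_ge0 (uu v2 k 1);
  have s2 := sqr_ge0 (uu v2 k 2); have s3 := sqr_ge0 (uu v2 k 3);
  have s4 := sqr_ge0 (uu v2 k 4); have s5 := sqr_ge0 (uu v2 k 5);
  have s6 := sqr_ge0 (uu v2 k 6); have s7 := sqr_ge0 (uu v2 k 7).
  case: i hi hij => [|[|[|[|i]]]] // _; case: j hj => [|[|[|[|j]]]] // _ _ /= hS;
  (apply: helperG => //; first [exact: hr0 | lra]).
Qed.

Lemma coset_wrong (hlam : 0 < lam) v2 k (c : bool) : c = ~~ kbit k 3 ->
  (forall n, 0 <= uu v2 k n <= lam) ->
  pp v2 k 0 + pp v2 k 1 + pp v2 k 2 + pp v2 k 3 < lam ^+ 2 ->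
  pp v2 k 0 + pp v2 k 1 + pp v2 k 2 + pp v2 k 3 <
  (decodeC' lam (if c then v2 - lam *: cvec R else v2)).2.
Proof.
move=> hc hr hS.
pose M i := if uu v2 k (2 * i) <= uu v2 k (2 * i).+1 then uu v2 k (2 * i).+1 else uu v2 k (2 * i).
have hM i : [/\ uu v2 k (2 * i) <= M i, uu v2 k (2 * i).+1 <= M i, 0 <= M i &
               M i ^+ 2 <= pp v2 k i].
  have /andP[a1 a2] := hr (2 * i)%N; have /andP[b1 b2] := hr (2 * i).+1.
  have := sqr_ge0 (uu v2 k (2 * i)); have := sqr_ge0 (uu v2 k (2 * i).+1).
  rewrite /M /pp; case: ifP => h; split; lra.
pose L i := pp v2 k i + lam ^+ 2 - 2 * lam * M i.
apply: (lt_le_trans _ (@core_lb R lam _ L _)); last first.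
  move=> i b hi; rewrite (pcost_form hlam _ k) // beta_pair // hc bX3 /L.
  have [m1 m2 m3 m4] := hM i.
  have /andP[a1 a2] := hr (2 * i)%N; have /andP[b1 b2] := hr (2 * i).+1.
  rewrite /pp; case: (b == beta k (2 * i)) => /=.
    have : 0 <= lam * (M i - uu v2 k (2 * i).+1) by apply: mulr_ge0; lra.
    rewrite !expr2 => *; lra.
  have : 0 <= lam * (M i - uu v2 k (2 * i)) by apply: mulr_ge0; lra.
  rewrite !expr2 => *; lra.
have [m01 m02 m03 m04] := hM 0%N; have [m11 m12 m13 m14] := hM 1%N;
have [m21 m22 m23 m24] := hM 2%N; have [m31 m32 m33 m34] := hM 3%N.
have hs : M 0%N + M 1%N + M 2%N + M 3%N < 2 * lam.
  apply: sum4_lt => //; lra.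
have : 0 < lam * (2 * lam - (M 0%N + M 1%N + M 2%N + M 3%N)) by apply: mulr_gt0; lra.
rewrite /L !expr2 => *; lra.
Qed.
End M.

Lemma sqrt_lt_sq (R : realType) (lam x : R) : Num.sqrt x < lam -> 0 <= x -> x < lam ^+ 2.
Proof.
move=> hs hx; rewrite -(sqr_sqrtr hx).
have h0 := sqrtr_ge0 x.
have : 0 < (lam - Num.sqrt x) * (lam + Num.sqrt x) by apply: mulr_gt0; lra.
rewrite !expr2 => *; lra.
Qed.

Theorem theorem1 (R : realType) (lam : R) (hlam : 0 < lam)
    (k1 : key) (v2 : 'rV[R]_8) :
  qnorm_vec (2 * lam) (v2 - encodeE8 lam k1) < lam ->
  k1 = decodeE8 lam v2.
Proof.
move=> H.
have Q0 : 0 < 2 * lam by lra.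
have hr n : 0 <= @uu R lam v2 k1 n <= lam.
  have /andP[h1 h2] := @qnorm_range R _ (ent v2 n - lam * (beta k1 n : nat)%:R) Q0.
  rewrite /uu; apply/andP; split; lra.
have hj (j : 'I_8) : qnorm (2 * lam) ((v2 - encodeE8 lam k1) 0 j) ^+ 2 = @uu R lam v2 k1 (val j) ^+ 2.
  by rewrite /uu /ent !mxE inord_val.
rewrite /qnorm_vec in H.
have eS : \sum_(i < 8) qnorm (2 * lam) ((v2 - encodeE8 lam k1) 0 i) ^+ 2 =
    \sum_(i < 8) @uu R lam v2 k1 (val i) ^+ 2 by apply: eq_bigr => j _; exact: hj.
rewrite eS in H.
rewrite !big_ord_recr big_ord0 /= in H.
have hS : @pp R lam v2 k1 0 + @pp R lam v2 k1 1 + @pp R lam v2 k1 2 + @pp R lam v2 k1 3 < lam ^+ 2.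
  have s0 := sqr_ge0 (@uu R lam v2 k1 0); have s1 := sqr_ge0 (@uu R lam v2 k1 1);
  have s2 := sqr_ge0 (@uu R lam v2 k1 2); have s3 := sqr_ge0 (@uu R lam v2 k1 3);
  have s4 := sqr_ge0 (@uu R lam v2 k1 4); have s5 := sqr_ge0 (@uu R lam v2 k1 5);
  have s6 := sqr_ge0 (@uu R lam v2 k1 6); have s7 := sqr_ge0 (@uu R lam v2 k1 7).
  have := @sqrt_lt_sq R lam _ H.
  have -> : @pp R lam v2 k1 0 + @pp R lam v2 k1 1 + @pp R lam v2 k1 2 + @pp R lam v2 k1 3 =
    (@uu R lam v2 k1 0 ^+ 2 + @uu R lam v2 k1 1 ^+ 2) + (@uu R lam v2 k1 2 ^+ 2 + @uu R lam v2 k1 3 ^+ 2)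
    + (@uu R lam v2 k1 4 ^+ 2 + @uu R lam v2 k1 5 ^+ 2) + (@uu R lam v2 k1 6 ^+ 2 + @uu R lam v2 k1 7 ^+ 2) by [].
  move=> h; apply: le_lt_trans (h _); lra.
rewrite /decodeE8.
case hd : (kbit k1 3).
- have hT1 := @coset_true R lam hlam v2 k1 true (esym hd) hr hS.
  have hT0 := @coset_wrong R lam hlam v2 k1 false ltac:(by rewrite hd) hr hS.
  rewrite /= in hT0 hT1.
  rewrite hT1.
  case: (decodeC' lam v2) hT0 => [k0' T0] /= hT0.
  rewrite hT0 /=.
  by rewrite {1}(beta_key k1) hd.
- have hT0 := @coset_true R lam hlam v2 k1 false (esym hd) hr hS.
  have hT1 := @coset_wrong R lam hlam v2 k1 true ltac:(by rewrite hd) hr hS.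
  rewrite /= in hT0 hT1.
  rewrite hT0.
  case: (decodeC' lam (v2 - lam *: cvec R)) hT1 => [k1' T1] /= hT1.
  rewrite ltNge (ltW hT1) /=.
  by rewrite {1}(beta_key k1) hd.
Qed.
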